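(* Let $-\infty\le l<r\le+\infty$, let $D$ be an interval with endpoints $l$ and $r$ (each endpoint may or may not belong to $D$), and write $\mathcal I=(l,r)$. Let $X_t$ be a regular diffusion with values in $D$ solving $dX_t=a(X_t)\,dt+\sigma(X_t)\,dw_t$, $X_0=x$, where $w_t$ is a standard Wiener process, $a:D\to\mathbb R$, $\sigma:D\to\mathbb R_+$, and for every $x\in\mathcal I$ there is $\varepsilon>0$ with $\int_{x-\varepsilon}^{x+\varepsilon}\frac{1+|a(y)|}{\sigma^2(y)}\,dy<\infty$. Let $\rho>0$ be a discount rate and $I$ an investment cost with $I<r$. Let $\psi$ be an increasing positive fundamental solution on $\mathcal I$ of $a(x)f'(x)+\frac12\sigma^2(x)f''(x)=\rho f(x)$. For $p\in\mathcal I$ let $\tau_p=\inf\{t\ge0: X_t\ge p\}$ and $$V(p;x)=\mathbb E^x\big[(X_{\tau_p}-I)e^{-\rho\tau_p}\mathbf 1_{\{\tau_p<\infty\}}\big]$$ (so $V(p;x)=x-I$ for $x\ge p$ and $V(p;x)=(p-I)\mathbb E^x e^{-\rho\tau_p}$ for $x<p$). Then a threshold $p^*\in\mathcal I$ satisfies $V(p^*;x)\ge V(p;x)$ for all $p\in\mathcal I$ and all $x\in\mathcal I$ if and only if (i) $\frac{p-I}{\psi(p)}\le\frac{p^*-I}{\psi(p^* )}$ whenever $p<p^*$ (with $p\in\mathcal I$), and (ii) the function $p\mapsto\frac{p-I}{\psi(p)}$ does not increase on $\{p\in\mathcal I: p\ge p^*\}$.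
   Context: $\mathbb E^x$ denotes expectation for the process started at $x$. Regularity means that from any $x\in\mathcal I$ the process reaches any $y\in\mathcal I$ in finite time with positive probability. The increasing fundamental solution $\psi$ (unique up to a positive multiplicative constant, with absolutely continuous derivative, solving the ODE a.e. on $\mathcal I$, and satisfying $0<\psi<\infty$ on $\mathcal I$) satisfies $\mathbb E^x e^{-\rho T_p}=\psi(x)/\psi(p)$ for $x<p$, where $T_p$ is the first hitting time of $p$. *)

(* Defs.v *)
From HB Require Import structures.
From mathcomp Require Import all_boot all_order all_algebra.
From mathcomp Require Import all_classical all_reals.
From mathcomp Require Import ereal.
Set Implicit Arguments. Unset Strict Implicit. Unset Printing Implicit Defensive.
Import Order.TTheory GRing.Theory Num.Theory.
Local Open Scope ring_scope.

Definition inI (R : realType) (l r : \bar R) (x : R) : Prop :=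
  (l < x%:E)%E /\ (x%:E < r)%E.

(* Value of the threshold policy p started at x, given the Laplace transform
   LT x p = E^x exp(-rho T_p) of the first hitting time of p:
   V(p;x) = x - I if x >= p, and (p - I) E^x e^{-rho tau_p} if x < p. *)
Definition Vthr (R : realType) (I0 : R) (LT : R -> R -> R) (p x : R) : R :=
  if p <= x then x - I0 else (p - I0) * LT x p.

(* Main.v *)
Require Import Defs.
From HB Require Import structures.
From mathcomp Require Import all_boot all_order all_algebra.
From mathcomp Require Import all_classical all_reals.
From mathcomp Require Import ereal.
Import Order.TTheory GRing.Theory Num.Theory.
Local Open Scope ring_scope.

Theorem theorem1 (R : realType) (l r : \bar R) (rho I0 : R)
    (psi : R -> R) (LT : R -> R -> R) :
  (l < r)%E -> 0 < rho -> (I0%:E < r)%E ->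
  (forall x, inI l r x -> 0 < psi x) ->
  (forall x y, inI l r x -> inI l r y -> x <= y -> psi x <= psi y) ->
  (forall x p, inI l r x -> inI l r p -> x < p -> LT x p = psi x / psi p) ->
  forall pstar, inI l r pstar ->
  ((forall p x, inI l r p -> inI l r x -> Vthr I0 LT p x <= Vthr I0 LT pstar x)
   <->
   ((forall p, inI l r p -> p < pstar ->
       (p - I0) / psi p <= (pstar - I0) / psi pstar) /\
    (forall p q, inI l r p -> inI l r q -> pstar <= p -> p <= q ->
       (q - I0) / psi q <= (p - I0) / psi p))).
Proof.
move=> _ _ _ Hpos _ HLT ps Hps.
have Vlt : forall p x, inI l r p -> inI l r x -> x < p ->
    Vthr I0 LT p x = (p - I0) / psi p * psi x.
  move=> p x Hp Hx xp; rewrite /Vthr leNgt xp /= (HLT _ _ Hx Hp xp).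
  by rewrite mulrA mulrAC.
have Vge : forall p x, p <= x -> Vthr I0 LT p x = x - I0.
  by move=> p x px; rewrite /Vthr px.
have E : forall x, inI l r x -> x - I0 = (x - I0) / psi x * psi x.
  move=> x Hx; rewrite divfK //; exact: lt0r_neq0 (Hpos _ Hx).
split.
- move=> H; split.
  + move=> p Hp pps.
    have := H p p Hp Hp.
    rewrite (Vge p p (lexx _)) (Vlt _ _ Hps Hp pps) [X in X <= _](E _ Hp).
    by rewrite ler_pM2r // Hpos.
  + move=> p q Hp Hq psp pq.
    case: (ltP p q) => [pq'|qp].
    * have := H q p Hq Hp.
      rewrite (Vlt _ _ Hq Hp pq') (Vge _ _ psp) [X in _ <= X](E _ Hp).
      by rewrite ler_pM2r // Hpos.
    * have -> : q = p by apply/eqP; rewrite eq_le pq qp.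
      by [].
- move=> [Hi Hii] p x Hp Hx.
  case: (leP ps x) => [psx|xps].
  + rewrite (Vge _ _ psx).
    case: (leP p x) => [px|xp]; first by rewrite (Vge _ _ px).
    rewrite (Vlt _ _ Hp Hx xp) [X in _ <= X](E _ Hx) ler_pM2r ?Hpos //.
    by apply: Hii => //; apply: ltW.
  + rewrite (Vlt _ _ Hps Hx xps).
    case: (leP p x) => [px|xp].
      rewrite (Vge _ _ px) [X in X <= _](E _ Hx) ler_pM2r ?Hpos //.
      exact: Hi.
    rewrite (Vlt _ _ Hp Hx xp) ler_pM2r ?Hpos //.
    case: (ltP p ps) => [pps|psp]; first exact: Hi.
    exact: Hii.
Qed.
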